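(* Assume the Setting and Constants below and that $(L_g,L_c)$ satisfies $(S_n)$. Let $k_c,\tilde k_c\in C^n_b(X_c,X_c)$ both satisfy $h(0)=0$, $Dh(0)=0$, $\|Dh\|_0\le L_c$. Let $K=\iota+(k_c,k_u,k_s)$ and $\tilde K=\iota+(\tilde k_c,\tilde k_u,\tilde k_s)$ be the (unique) conjugacies associated with $k_c$ and $\tilde k_c$ respectively, i.e. $(r,k_u,k_s)$ (resp. $(\tilde r,\tilde k_u,\tilde k_s)$) is the unique triple with $k_u\in C^0_b(X_c,X_u)$, $k_s\in C^0_b(X_c,X_s)$, $r\in C^0_b(X_c,X_c)$, $A_c+r$ a homeomorphism, and $F\circ K=K\circ(A_c+r)$ (resp. the same with tildes). Then $K(X_c)=\tilde K(X_c)$.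
   Context: Notation. $C^k_b(Y,Z)$ is the Banach space of $C^k$ maps $f:Y\to Z$ with $\|f\|_k:=\max_{0\le j\le k}\sup_y\|D^jf(y)\|<\infty$. $\iota:X_c\to X$ is the inclusion, and $\iota+(k_c,k_u,k_s)$ denotes $x\mapsto(x+k_c(x))+k_u(x)+k_s(x)$. Setting. Let $n\ge2$ be an integer and $X$ a Banach space with $X=X_c\oplus X_u\oplus X_s$ for closed subspaces, whose norm satisfies $\|x\|=\max\{\|x_c\|,\|x_u\|,\|x_s\|\}$. Let $A$ be a bounded linear operator on $X$ leaving $X_c,X_u,X_s$ invariant, with restrictions $A_c,A_u,A_s$; $A_c,A_u$ invertible, and $\|A_c^{-1}\|^{\tilde n}\|A_s\|<1$, $\|A_u^{-1}\|\|A_c\|^{\tilde n}<1$ for $1\le\tilde n\le n$. Let $L_g,L_c\ge0$, $F=A+g$ with $g\in C^n_b(X,X)$, $g(0)=0$, $Dg(0)=0$, $\|Dg\|_0\le L_g$. Constants. $L_r:=\frac{L_g+L_c(2\|A_c\|+L_g)}{1-L_c}$, $L_t:=\frac{\|A_c^{-1}\|^2L_r}{1-\|A_c^{-1}\|L_r}$, $L_u:=\frac{\|A_u^{-1}\|(1+L_c)L_g}{1-L_r\|A_u^{-1}\|-\|A_c\|\|A_u^{-1}\|}$, $L_s:=\frac{\|A_c^{-1}\|(1+L_c)L_g}{1-L_r\|A_c^{-1}\|-\|A_s\|\|A_c^{-1}\|}$, $L_{-1}:=\|A_c^{-1}\|+L_t$; $\theta_{\tilde n,1}:=L_g+L_c$,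 $\theta_{\tilde n,2}:=\|A_u^{-1}\|((\|A_c\|+L_r)^{\tilde n}+L_g+L_u)$, $\theta_{\tilde n,3}:=L_{-1}^{\tilde n}(\|A_s\|(1+L_{-1}L_s)+L_g(1+L_{-1}(1+L_c)))$. $(S_N)$ means: $L_c<1$, $L_r\|A_c^{-1}\|<1$, $L_r\|A_u^{-1}\|+\|A_c\|\|A_u^{-1}\|<1$, $L_r\|A_c^{-1}\|+\|A_s\|\|A_c^{-1}\|<1$, and $\theta_{\tilde n,i}<1$ for $i=1,2,3$, $0\le\tilde n\le N$. *)

(* Defs.v *)
From HB Require Import structures.
From mathcomp Require Import all_boot all_order all_algebra.
From mathcomp Require Import all_classical all_reals all_analysis.
Set Implicit Arguments.
Unset Strict Implicit.
Unset Printing Implicit Defensive.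
Import Order.TTheory GRing.Theory Num.Theory.
Import numFieldNormedType.Exports.
Local Open Scope ring_scope.
Local Open Scope classical_set_scope.

Definition opnorm (R : realType) (V W : normedModType R) (f : V -> W) : R :=
  sup [set `|f x| | x in [set x : V | `|x| <= 1]].

(* Iterated Frechet derivative evaluated on directions:
   Dit j f y hs = D^j f(y)[hs 0, ..., hs (j-1)],
   with D^(j+1) f(y)[h_0..h_j] = D (y' |-> D^j f(y')[h_0..h_(j-1)]) (y) [h_j]. *)
Fixpoint Dit (R : realType) (V W : normedModType R) (j : nat) (f : V -> W)
  : V -> (nat -> V) -> W :=
  match j with
  | 0 => fun y _ => f y
  | j'.+1 => fun y hs => 'd (fun y' => Dit j' f y' hs) y (hs j')
  end.

Definition unit_dirs (R : realType) (V : normedModType R) (j : nat)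
  (hs : nat -> V) : Prop := forall i, (i < j)%N -> `|hs i| <= 1.

(* f \in C^k_b(V, W): k times continuously (Frechet) differentiable, each
   D^j f (j <= k) continuous in operator norm and sup_y ||D^j f(y)|| < oo. *)
Definition Cnb (R : realType) (V W : normedModType R) (k : nat) (f : V -> W)
  : Prop :=
  [/\ (forall j, (j < k)%N -> forall (hs : nat -> V) (y : V),
          differentiable (fun y' => Dit j f y' hs) y),
      (forall j, (j <= k)%N -> forall (y : V) (e : R), 0 < e ->
          exists2 d : R, 0 < d & forall y' : V, `|y' - y| < d ->
            forall hs : nat -> V, unit_dirs j hs ->
              `|Dit j f y' hs - Dit j f y hs| <= e) &
      (exists M : R, forall j, (j <= k)%N -> forall (y : V) (hs : nat -> V),
          unit_dirs j hs -> `|Dit j f y hs| <= M)].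

Definition homeomorphism (T U : topologicalType) (f : T -> U) : Prop :=
  exists h : U -> T, [/\ cancel f h, cancel h f, continuous f & continuous h].

(* X = X_c (+) X_u (+) X_s, realised as the product with the max norm *)
Definition blockA (R : realType) (Xc Xu Xs : normedModType R)
  (Ac : Xc -> Xc) (Au : Xu -> Xu) (As : Xs -> Xs) (x : Xc * Xu * Xs)
  : Xc * Xu * Xs := (Ac x.1.1, Au x.1.2, As x.2).

Definition conjK (R : realType) (Xc Xu Xs : normedModType R)
  (kc : Xc -> Xc) (ku : Xc -> Xu) (ks : Xc -> Xs) (x : Xc) : Xc * Xu * Xs :=
  (x + kc x, ku x, ks x).

Definition conj_triple (R : realType) (Xc Xu Xs : normedModType R)
  (Ac : Xc -> Xc) (Au : Xu -> Xu) (As : Xs -> Xs)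
  (g : Xc * Xu * Xs -> Xc * Xu * Xs) (kc : Xc -> Xc)
  (r : Xc -> Xc) (ku : Xc -> Xu) (ks : Xc -> Xs) : Prop :=
  [/\ Cnb 0 ku, Cnb 0 ks, Cnb 0 r,
      homeomorphism (fun x : Xc => Ac x + r x) &
      forall x : Xc,
        blockA Ac Au As (conjK kc ku ks x) + g (conjK kc ku ks x)
        = conjK kc ku ks (Ac x + r x)].

(* Constants; nAc = ||A_c||, nAci = ||A_c^-1||, nAui = ||A_u^-1||, nAs = ||A_s|| *)
Section Constants.
Variables (R : realType) (nAc nAci nAui nAs Lg Lc : R).
Definition cLr : R := (Lg + Lc * (2 * nAc + Lg)) / (1 - Lc).
Definition cLt : R := nAci ^+ 2 * cLr / (1 - nAci * cLr).
Definition cLu : R := nAui * (1 + Lc) * Lg / (1 - cLr * nAui - nAc * nAui).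
Definition cLs : R := nAci * (1 + Lc) * Lg / (1 - cLr * nAci - nAs * nAci).
Definition cLm1 : R := nAci + cLt.
Definition theta1 (m : nat) : R := Lg + Lc.
Definition theta2 (m : nat) : R := nAui * ((nAc + cLr) ^+ m + Lg + cLu).
Definition theta3 (m : nat) : R :=
  cLm1 ^+ m * (nAs * (1 + cLm1 * cLs) + Lg * (1 + cLm1 * (1 + Lc))).
Definition cond_S (N : nat) : Prop :=
  [/\ Lc < 1, cLr * nAci < 1, cLr * nAui + nAc * nAui < 1,
      cLr * nAci + nAs * nAci < 1 &
      forall m, (m <= N)%N -> [/\ theta1 m < 1, theta2 m < 1 & theta3 m < 1]].
End Constants.

(* Main.v *)
Require Import Defs.
From HB Require Import structures.
From mathcomp Require Import all_boot all_order all_algebra.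
From mathcomp Require Import all_classical all_reals all_analysis.
From mathcomp Require Import ring lra.
Import Order.TTheory GRing.Theory Num.Theory.
Import numFieldNormedType.Exports.
Local Open Scope ring_scope.
Local Open Scope classical_set_scope.

Section S.
Context {R : realType} {V W : normedModType R}.
Lemma contP (f : V -> W) (y : V) : {for y, continuous f} <->
  forall e, 0 < e -> exists2 d, 0 < d & forall y', `|y - y'| < d -> `|f y - f y'| <= e.
Proof.
split => [/cvgrPdist_le H|H].
  move=> e e0; have /nbhs_normP := H e e0; rewrite /nbhs_ball_ => -[d d0 Hd].
  exists d => // y' yy'; exact: Hd.
apply/cvgrPdist_le => e e0.
have [d d0 Hd] := H e e0; apply/nbhs_normP; exists d => // y' yy'; exact: Hd.
Qed.
Lemma diff_eps (f : V -> W) p : differentiable f p -> forall e, 0 < e ->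
  exists2 d, 0 < d & forall k, `|k| < d -> `|f (p + k) - f p - 'd f p k| <= e * `|k|.
Proof.
move=> /diff_locally /eqaddoP L e e0.
have /nbhs_normP := L e e0; rewrite /nbhs_ball_ => -[d d0 Hd].
exists d => // k kd.
have := Hd k; rewrite /ball_ /= sub0r normrN => /(_ kd).
move=> H; apply: le_trans H; rewrite le_eqVlt; apply/orP; left; apply/eqP; congr (`|_|).
rewrite /= !fctE /= (addrC k). by rewrite opprD addrA.
Qed.
Lemma mvi (f : V -> W) (M : R) : (forall y, differentiable f y) ->
  (forall y h, `|h| <= 1 -> `|'d f y h| <= M) ->
  forall x y, `|f x - f y| <= M * `|x - y|.
Proof.
move=> df dM.
have M0 : 0 <= M.
  have := dM 0 0; rewrite normr0 ler01 linear0 normr0; exact.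
have dM' : forall y h, `|'d f y h| <= M * `|h|.
  move=> y h; have [->|h0] := eqVneq h 0; first by rewrite linear0 !normr0 mulr0.
  have hpos : 0 < `|h| by rewrite normr_gt0.
  set u := `|h|^-1 *: h.
  have hu : h = `|h| *: u by rewrite /u scalerA divff ?scale1r // gt_eqF.
  rewrite {1}hu linearZ normrZ normr_id mulrC; apply: (ler_wpM2r (ltW hpos)).
  by apply: dM; rewrite /u normrZ normfV normr_id mulVf // gt_eqF.
move=> x y; set v := x - y; set C := M * `|v|.
have C0 : 0 <= C by rewrite mulr_ge0.
pose g t := f (y + t *: v).
have loc : forall tau e, 0 < e -> exists2 d, 0 < d & forall s, `|s - tau| < d ->
    `|g s - g tau| <= (C + e) * `|s - tau|.
  move=> tau e e0; set p := y + tau *: v.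
  have v1 : 0 < `|v| + 1 by rewrite ltr_wpDl.
  set e' := e / (`|v| + 1).
  have e'0 : 0 < e' by rewrite divr_gt0.
  have e'v : e' * `|v| <= e.
    by rewrite /e' mulrAC ler_pdivrMr // ler_pM2l // lerDl.
  have [d d0 Hd] := @diff_eps f p (df p) e' e'0.
  exists (d / (`|v| + 1)); first by rewrite divr_gt0.
  move=> s sd.
  have eq : y + s *: v = p + (s - tau) *: v by rewrite /p scalerBl -addrA subrKC.
  rewrite /g eq -/p; set k := (s - tau) *: v.
  have knorm : `|k| = `|s - tau| * `|v| by rewrite normrZ.
  have kd : `|k| < d.
    rewrite knorm; apply: le_lt_trans (_ : `|s - tau| * (`|v| + 1) < d).
      by rewrite ler_wpM2l // lerDl.
    by rewrite -ltr_pdivlMr.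
  have H1 := Hd k kd.
  have -> : f (p + k) - f p = (f (p + k) - f p - 'd f p k) + 'd f p k by rewrite subrK.
  apply: le_trans (ler_normD _ _) _.
  apply: le_trans (lerD H1 (dM' p k)) _.
  rewrite knorm /C mulrDl; rewrite addrC; apply: lerD.
    by rewrite mulrCA mulrC.
  by rewrite mulrCA mulrC ler_wpM2r.
have key : forall e, 0 < e -> `|g 1 - g 0| <= C + e.
  move=> e e0.
  have Ce0 : 0 <= C + e by rewrite addr_ge0 // ltW.
  pose S := [set t : R | 0 <= t <= 1 /\
     forall s, 0 <= s <= t -> `|g s - g 0| <= (C + e) * s].
  have S0 : S 0.
    split; first by rewrite lexx ler01.
    move=> s /andP[s0 s0']; have -> : s = 0 by apply/eqP; rewrite eq_le s0' s0.
    by rewrite subrr normr0 mulr0.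
  have hs : has_sup S.
    by split; [exists 0 | exists 1 => t [/andP[_ ?] _]].
  set tau := sup S.
  have tau0 : 0 <= tau by apply: sup_upper_bound.
  have tau1 : tau <= 1.
    by apply: ge_sup; [exists 0 | move=> t [/andP[_ ?] _]].
  have below : forall s, 0 <= s < tau -> `|g s - g 0| <= (C + e) * s.
    move=> s /andP[s0 st].
    have ts : 0 < tau - s by rewrite subr_gt0.
    have [t [_ Ht] lt] := sup_adherent ts hs.
    apply: Ht; rewrite s0 /=; apply: ltW.
    by move: lt; rewrite -/tau opprB addrC subrK.
  have [d d0 Hd] := loc tau e e0.
  have attau : `|g tau - g 0| <= (C + e) * tau.
    have [t St lt] := sup_adherent d0 hs.
    have ttau : t <= tau := sup_upper_bound hs St.
    case: St => /andP[t0 _] Ht.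
    have H1 : `|g t - g 0| <= (C + e) * t by apply: Ht; rewrite t0 lexx.
    have H2 : `|g t - g tau| <= (C + e) * `|t - tau|.
      apply: Hd; rewrite distrC ger0_norm ?subr_ge0 //.
      by rewrite ltrBlDr -ltrBlDl.
    have -> : g tau - g 0 = (g t - g 0) - (g t - g tau).
      by rewrite opprB [RHS]addrC addrA subrK.
    apply: le_trans (ler_normB _ _) _.
    apply: le_trans (lerD H1 H2) _.
    rewrite distrC ger0_norm ?subr_ge0 // -mulrDr.
    by rewrite subrKC.
  have upto : forall s, 0 <= s <= tau -> `|g s - g 0| <= (C + e) * s.
    move=> s /andP[s0]; rewrite le_eqVlt => /orP[/eqP -> //|st].
    by apply: below; rewrite s0 st.
  have tauE : tau = 1.
    apply/eqP; rewrite eq_le tau1 /= leNgt; apply/negP => lt1.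
    set s1 := Num.min 1 (tau + d / 2).
    have d2 : 0 < d / 2 by rewrite divr_gt0.
    have s1gt : tau < s1 by rewrite lt_min lt1 /= ltrDl.
    have Ss1 : S s1.
      split.
        apply/andP; split; [exact: le_trans tau0 (ltW s1gt) | by rewrite /s1 ge_min lexx].
      move=> s /andP[s0 ss1].
      have [st|ts] := leP s tau; first by apply: upto; rewrite s0 st.
      have H2 : `|g s - g tau| <= (C + e) * `|s - tau|.
        apply: Hd; rewrite ger0_norm ?subr_ge0 ?ltW //.
        rewrite ltrBlDl; apply: le_lt_trans ss1 _.
        rewrite /s1 gt_min; apply/orP; right.
        by rewrite ltrD2l ltr_pdivrMr // ltr_pMr // ltr1n.
      have -> : g s - g 0 = (g s - g tau) + (g tau - g 0) by rewrite addrA subrK.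
      apply: le_trans (ler_normD _ _) _.
      apply: le_trans (lerD H2 attau) _.
      rewrite ger0_norm; last by rewrite subr_ge0 ltW.
      by rewrite -mulrDr subrK.
    have := sup_upper_bound hs Ss1; rewrite -/tau => H.
    by move: s1gt; rewrite ltNge H.
  by have := upto 1; rewrite mulr1 tauE lexx ler01 => /(_ isT).
apply/ler_addgt0Pr => e e0; have := key e e0.
by rewrite /g scale1r scale0r addr0 /v subrKC.
Qed.

Lemma lip_cont (f : V -> W) c : (forall x y, `|f x - f y| <= c * `|x - y|) -> continuous f.
Proof.
move=> fL y; apply/contP => e e0.
have c1 : 0 < `|c| + 1 by rewrite ltr_wpDl.
exists (e / (`|c| + 1)); first by rewrite divr_gt0.
move=> y' yy'; apply: le_trans (fL y y') _.
have H : `|y - y'| * (`|c| + 1) < e by rewrite -ltr_pdivlMr.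
apply: le_trans (ltW H); rewrite mulrC; apply: ler_wpM2l => //.
by apply: le_trans (ler_norm c) _; rewrite lerDl.
Qed.

Lemma normB3 (a b c : W) : `|a - b| <= `|a - c| + `|c - b|.
Proof.
have E : a - b = (a - c) + (c - b) by rewrite addrA subrK.
by rewrite {1}E ler_normD.
Qed.

Lemma Cnb0I (f : V -> W) : continuous f -> (exists M, forall y, `|f y| <= M) -> Cnb 0 f.
Proof.
move=> cf [M HM]; split.
- by move=> j; rewrite ltn0.
- move=> j; rewrite leqn0 => /eqP -> y e e0 /=.
  have /contP := cf y; move=> /(_ e e0) [d d0 Hd]; exists d => // y' yy' hs _.
  by rewrite distrC; apply: Hd; rewrite distrC.
- by exists M => j; rewrite leqn0 => /eqP -> y hs _ /=.
Qed.

Lemma Cnb0E (f : V -> W) : Cnb 0 f -> continuous f /\ exists M, forall y, `|f y| <= M.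
Proof.
case=> _ Hc [M HM]; split; last first.
  exists M => y; apply: (HM 0%N (leqnn 0) y (fun _ => 0)).
  by move=> i; rewrite ltn0.
move=> y; apply/contP => e e0.
have [d d0 Hd] := Hc 0%N (leqnn 0) y e e0; exists d => // y' yy'.
rewrite distrC; apply: (Hd y' _ (fun _ => 0)); first by rewrite distrC.
by move=> i; rewrite ltn0.
Qed.

Lemma CnbnE (n : nat) (f : V -> W) : (0 < n)%N -> Cnb n f ->
  (forall y, differentiable f y) /\ exists M, forall y, `|f y| <= M.
Proof.
move=> n0 [Hd _ [M HM]]; split.
  by move=> y; exact: (Hd 0%N n0 (fun _ => 0) y).
exists M => y; apply: (HM 0%N (leq0n n) y (fun _ => 0)).
by move=> i; rewrite ltn0.
Qed.
End S.
Arguments Cnb0E {R V W f}.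
Arguments CnbnE {R V W n f}.
Arguments lip_cont {R V W f c}.
Section S2.
Context {R : realType} {X : completeNormedModType R}.
Lemma surj_idk (k : X -> X) (q : R) : 0 <= q -> q < 1 ->
  (forall x y, `|k x - k y| <= q * `|x - y|) -> forall z, exists y, y + k y = z.
Proof.
move=> q0 q1 kL z.
pose f := totalfun_ setT (fun y : X => z - k y).
have cf : is_contraction f.
  exists (NngNum q0); split => //=.
  move=> [a b] _ /=; rewrite /totalfun_.
  have -> : z - k a - (z - k b) = k b - k a.
    by rewrite opprB addrC addrA subrK.
  by rewrite distrC -[X in _ <= X]/(q * `|a - b|) kL.
have [p _ fp] := banach_fixed_point cf closedT (ex_intro _ z I).
exists p; by rewrite [X in X + _]fp /f /totalfun_ subrK.
Qed.
Lemma idk_inv (k : X -> X) (q B : R) : 0 <= q -> q < 1 ->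
  (forall x y, `|k x - k y| <= q * `|x - y|) -> (forall y, `|k y| <= B) ->
  exists Pi : X -> X, [/\ forall z, Pi z + k (Pi z) = z,
     forall y, Pi (y + k y) = y,
     forall z z', `|Pi z - Pi z'| <= (1 - q)^-1 * `|z - z'| &
     forall z, `|Pi z - z| <= B].
Proof.
move=> q0 q1 kL kB.
have /choice [Pi PiK] := @surj_idk k q q0 q1 kL.
have q1' : 0 < 1 - q by rewrite subr_gt0.
have key : forall a b, `|a - b| <= `|(a + k a) - (b + k b)| + q * `|a - b|.
  move=> a b.
  have E : a - b = ((a + k a) - (b + k b)) + (k b - k a).
    by rewrite opprD [a + k a + _]addrACA -[RHS]addrA [(k a - k b) + _]addrA subrK subrr addr0.
  rewrite {1}E; apply: le_trans (ler_normD _ _) _; apply: lerD => //.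
  by rewrite distrC; apply: kL.
exists Pi; split => //.
- move=> y; set a := Pi (y + k y).
  have := key a y; rewrite PiK subrr normr0 add0r => H.
  apply/eqP; rewrite -subr_eq0 -normr_eq0; apply/eqP/le_anti.
  rewrite normr_ge0 andbT.
  have t0 := normr_ge0 (a - y).
  move: H t0; set t := `|a - y|; move=> H t0; nra.
- move=> z z'; have := key (Pi z) (Pi z'); rewrite !PiK => H.
  rewrite -ler_pdivrMl // ?invr_gt0 // invrK.
  have t0 := normr_ge0 (Pi z - Pi z'); move: H t0.
  set t := `|Pi z - Pi z'|; set w := `|z - z'|; move=> H t0; nra.
- move=> z; have -> : Pi z - z = - k (Pi z).
    by rewrite -{2}(PiK z) opprD addrA subrr add0r.
  by rewrite normrN.
Qed.
End S2.

Theorem proposition6p3 (R : realType) (Xc Xu Xs : completeNormedModType R)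
  (n : nat) (hn : (2 <= n)%N)
  (Ac : {linear Xc -> Xc}) (Au : {linear Xu -> Xu}) (As : {linear Xs -> Xs})
  (Aci : Xc -> Xc) (Aui : Xu -> Xu)
  (cAc : continuous Ac) (cAu : continuous Au) (cAs : continuous As)
  (cAci : continuous Aci) (cAui : continuous Aui)
  (AcK : cancel Ac Aci) (AciK : cancel Aci Ac)
  (AuK : cancel Au Aui) (AuiK : cancel Aui Au)
  (gap_s : forall m, (1 <= m <= n)%N -> opnorm Aci ^+ m * opnorm As < 1)
  (gap_u : forall m, (1 <= m <= n)%N -> opnorm Aui * opnorm Ac ^+ m < 1)
  (Lg Lc : R) (Lg0 : 0 <= Lg) (Lc0 : 0 <= Lc)
  (hS : cond_S (opnorm Ac) (opnorm Aci) (opnorm Aui) (opnorm As) Lg Lc n)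
  (g : Xc * Xu * Xs -> Xc * Xu * Xs) (g_reg : Cnb n g) (g0 : g 0 = 0)
  (dg0 : forall h, 'd g 0 h = 0)
  (dgL : forall y h, `|h| <= 1 -> `|'d g y h| <= Lg)
  (kc kc' : Xc -> Xc)
  (kc_reg : Cnb n kc) (kc0 : kc 0 = 0) (dkc0 : forall h, 'd kc 0 h = 0)
  (dkcL : forall y h, `|h| <= 1 -> `|'d kc y h| <= Lc)
  (kc'_reg : Cnb n kc') (kc'0 : kc' 0 = 0) (dkc'0 : forall h, 'd kc' 0 h = 0)
  (dkc'L : forall y h, `|h| <= 1 -> `|'d kc' y h| <= Lc)
  (r : Xc -> Xc) (ku : Xc -> Xu) (ks : Xc -> Xs)
  (hK : conj_triple Ac Au As g kc r ku ks)
  (hKuniq : forall r2 ku2 ks2, conj_triple Ac Au As g kc r2 ku2 ks2 ->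
              [/\ r2 = r, ku2 = ku & ks2 = ks])
  (r' : Xc -> Xc) (ku' : Xc -> Xu) (ks' : Xc -> Xs)
  (hK' : conj_triple Ac Au As g kc' r' ku' ks')
  (hK'uniq : forall r2 ku2 ks2, conj_triple Ac Au As g kc' r2 ku2 ks2 ->
              [/\ r2 = r', ku2 = ku' & ks2 = ks']) :
  range (conjK kc ku ks) = range (conjK kc' ku' ks').
Proof.
case: hS => Lc1 _ _ _ _.
have n0 : (0 < n)%N by apply: leq_trans hn.
have [dkc [Bk HBk]] := CnbnE n0 kc_reg.
have [dkc' [Bk' HBk']] := CnbnE n0 kc'_reg.
have kcL := @mvi R Xc Xc kc Lc dkc dkcL.
have kc'L := @mvi R Xc Xc kc' Lc dkc' dkc'L.
have [Pi [PiK PiE PiL PiB]] := @idk_inv R Xc kc Lc Bk Lc0 Lc1 kcL HBk.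
have [Pi' [Pi'K Pi'E Pi'L Pi'B]] := @idk_inv R Xc kc' Lc Bk' Lc0 Lc1 kc'L HBk'.
pose h x := Pi' (x + kc x).
pose hi x := Pi (x + kc' x).
have hE : forall x, h x + kc' (h x) = x + kc x by move=> x; apply: Pi'K.
have hiE : forall x, hi x + kc (hi x) = x + kc' x by move=> x; apply: PiK.
have hhK : forall x, hi (h x) = x by move=> x; rewrite /hi hE PiE.
have hiK : forall x, h (hi x) = x by move=> x; rewrite /h hiE Pi'E.
have LipP : forall (k : Xc -> Xc), (forall x y, `|k x - k y| <= Lc * `|x - y|) ->
    forall x y, `|(x + k x) - (y + k y)| <= (1 + Lc) * `|x - y|.
  move=> k kL x y; rewrite opprD addrACA mulrDl mul1r.
  by apply: le_trans (ler_normD _ _) _; apply: lerD.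
have Lc1' : 0 <= (1 - Lc)^-1 by rewrite invr_ge0 subr_ge0 ltW.
have hL : forall x y, `|h x - h y| <= ((1 - Lc)^-1 * (1 + Lc)) * `|x - y|.
  move=> x y; apply: le_trans (Pi'L _ _) _; rewrite -mulrA.
  by apply: ler_wpM2l => //; apply: LipP.
have hiL : forall x y, `|hi x - hi y| <= ((1 - Lc)^-1 * (1 + Lc)) * `|x - y|.
  move=> x y; apply: le_trans (PiL _ _) _; rewrite -mulrA.
  by apply: ler_wpM2l => //; apply: LipP.
have ch : continuous h := lip_cont hL.
have chi : continuous hi := lip_cont hiL.
have hB : forall x, `|h x - x| <= Bk' + Bk.
  move=> x; have E : h x - x = (Pi' (x + kc x) - (x + kc x)) + kc x.
    by rewrite opprD addrA subrK.
  by rewrite E; apply: le_trans (ler_normD _ _) _; apply: lerD.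
have hiB : forall x, `|hi x - x| <= Bk + Bk'.
  move=> x; have E : hi x - x = (Pi (x + kc' x) - (x + kc' x)) + kc' x.
    by rewrite opprD addrA subrK.
  by rewrite E; apply: le_trans (ler_normD _ _) _; apply: lerD.
case: hK' => ku'C ks'C r'C [psi [phK psK cph cps]] conj'.
have [cku' [Mu Hu]] := Cnb0E ku'C.
have [cks' [Ms Hs]] := Cnb0E ks'C.
have [cr' [Mr Hr]] := Cnb0E r'C.
have [Ack Ack0 AcB] := linear_lipschitz cAc.
have phK' : forall x, psi (Ac x + r' x) = x := phK.
have psK' : forall y, Ac (psi y) + r' (psi y) = y := psK.
pose r2 x := hi (Ac (h x) + r' (h x)) - Ac x.
have Kh : forall x, conjK kc (ku' \o h) (ks' \o h) x = conjK kc' ku' ks' (h x).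
  by move=> x; rewrite /conjK /= hE.
have cphi : forall x, {for x, continuous (fun y => Ac y + r' y)}.
  by move=> x; exact: (@continuousD _ _ _ (Ac : Xc -> Xc) r' x (cAc x) (cr' x)).
have ctr : conj_triple Ac Au As g kc r2 (ku' \o h) (ks' \o h).
  split.
  - apply: Cnb0I; last by exists Mu => y; apply: Hu.
    by move=> x; apply: continuous_comp; [exact: ch | exact: cku'].
  - apply: Cnb0I; last by exists Ms => y; apply: Hs.
    by move=> x; apply: continuous_comp; [exact: ch | exact: cks'].
  - apply: Cnb0I.
      move=> x; apply: (@continuousB _ _ _ (fun x => hi (Ac (h x) + r' (h x))) Ac x).
        apply: (@continuous_comp _ _ _ h (fun y => hi (Ac y + r' y))); first exact: ch.
        by apply: (@continuous_comp _ _ _ (fun y => Ac y + r' y) hi); [exact: cphi | exact: chi].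
      exact: cAc.
    exists ((Bk + Bk') + (Ack * (Bk' + Bk) + Mr)) => x.
    rewrite /r2; set u := Ac (h x) + r' (h x).
    apply: le_trans (normB3 _ _ u) _; apply: lerD; first exact: hiB.
    rewrite /u addrAC -linearB; apply: le_trans (ler_normD _ _) _; apply: lerD => //.
    apply: le_trans (AcB _) _; apply: ler_wpM2l; [exact: ltW | exact: hB].
  - have -> : (fun x => Ac x + r2 x) = (fun x => hi (Ac (h x) + r' (h x))).
      by apply: funext => x; rewrite /r2 addrC subrK.
    exists (fun y => hi (psi (h y))); split.
    + by move=> x /=; rewrite hiK phK' hhK.
    + by move=> y /=; rewrite hiK psK' hhK.
    + move=> x; apply: (@continuous_comp _ _ _ h (fun y => hi (Ac y + r' y))); first exact: ch.
      by apply: (@continuous_comp _ _ _ (fun y => Ac y + r' y) hi); [exact: cphi | exact: chi].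
    + move=> x; apply: (@continuous_comp _ _ _ h (fun y => hi (psi y))); first exact: ch.
      by apply: (@continuous_comp _ _ _ psi hi); [exact: cps | exact: chi].
  - move=> x; rewrite Kh conj' Kh; congr conjK.
    by rewrite /r2 [Ac x + _]addrC subrK hiK.
have [_ eku eks] := hKuniq _ _ _ ctr.
apply/seteqP; split => _ [x _ <-].
- by exists (h x) => //; rewrite -Kh eku eks.
- by exists (hi x) => //; rewrite -eku -eks Kh hiK.
Qed.
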